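(* Let $k\ge1$ and let $A,B$ be FDSs. If $A^k=B^k$, then $[A]_0=[B]_0$.
   Context: A finite dynamical system (FDS) is a function $A:S_A\to S_A$ on a finite set, considered up to isomorphism of functional graphs. The product $AB$ acts on $S_A\times S_B$ by $(a,b)\mapsto(A(a),B(b))$ and $A^k$ is the $k$-fold product. A state $s$ is a cycle state if some $m$-fold iterate ($m>0$) of $A$ fixes $s$; $[A]_0$ is the restriction of $A$ to its cycle states (a permutation). *)

(* Defs.v *)
From mathcomp Require Import all_boot.
Set Implicit Arguments. Unset Strict Implicit. Unset Printing Implicit Defensive.

(* A finite dynamical system (FDS) is a map f : T -> T on a finite type T.
   FDSs are compared up to isomorphism of functional graphs. *)

Definition fds_iso (T U : finType) (f : T -> T) (g : U -> U) : Prop :=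
  exists h : T -> U, bijective h /\ forall x, h (f x) = g (h x).

Definition fds_pow (k : nat) (T : finType) (f : T -> T)
  : {ffun 'I_k -> T} -> {ffun 'I_k -> T} :=
  fun x => [ffun i => f (x i)].
Arguments fds_pow k {T} f _.

Definition cycle_state (T : Type) (f : T -> T) (s : T) : Prop :=
  exists m : nat, 0 < m /\ iter m f s = s.

(* [A]_0 = [B]_0: the restrictions of f and g to their cycle states are
   isomorphic, i.e. there is a bijection between the cycle states of f and
   those of g commuting with f and g. *)
Definition cycle_part_iso (T U : finType) (f : T -> T) (g : U -> U) : Prop :=
  exists h : T -> U,
    (forall x, cycle_state f x -> cycle_state g (h x)) /\
    (forall x y, cycle_state f x -> cycle_state f y -> h x = h y -> x = y) /\
    (forall y, cycle_state g y -> exists x, cycle_state f x /\ h x = y) /\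
    (forall x, cycle_state f x -> h (f x) = g (h x)).

(* Main.v *)
Require Import Defs.
From mathcomp Require Import all_boot.
From mathcomp Require Import zify.
From Stdlib Require Import Lia.
Set Implicit Arguments. Unset Strict Implicit. Unset Printing Implicit Defensive.

Lemma iter_mod (T : Type) (f : T -> T) d z n :
  iter d f z = z -> iter n f z = iter (n %% d) f z.
Proof.
move=> hd; rewrite {1}(divn_eq n d) addnC iterD; congr (iter _ f _).
elim: (n %/ d) => //= q IH; by rewrite mulSn iterD IH hd.
Qed.

Lemma iter_comm (T : Type) (f : T -> T) m n z :
  iter m f (iter n f z) = iter n f (iter m f z).
Proof. by rewrite -!iterD addnC. Qed.

Definition minimal_on (T : finType) (f : T -> T) (A : {set T}) d :=
  forall m z, 0 < m -> m < d -> z \in A -> iter m f z != z.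

Lemma iter_closed (T : finType) (f : T -> T) (A : {set T}) z n :
  (forall z, z \in A -> f z \in A) -> z \in A -> iter n f z \in A.
Proof. by move=> cl zA; elim: n => //= n IH; apply: cl. Qed.

Section Orb.
End Orb.

Lemma orb_facts (T : finType) (f : T -> T) (A : {set T}) x d :
  0 < d -> x \in A -> (forall z, z \in A -> f z \in A) ->
  iter d f x = x -> minimal_on f A d ->
  let s := traject f x d in
  [/\ size s = d, uniq s,
      forall z, z \in s -> z = iter (index z s) f x /\ index z s < d,
      forall i, i < d -> iter i f x \in s /\ index (iter i f x) s = i &
      (forall z, z \in s -> z \in A) /\
      (forall z n, z \in s -> (iter n f z == z) = (d %| n))].
Proof.
move=> d0 xA cl hd mn s.
have sz : size s = d by rewrite size_traject.
have us : uniq s.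
  apply/negPn/negP => /(uniqPn x) [i [j [lij]]].
  rewrite sz => ljd.
  have lid : i < d by apply: ltn_trans ljd.
  rewrite !nth_traject // => e.
  have : iter (j - i) f (iter i f x) = iter i f x.
    by rewrite -iterD subnK // ltnW.
  apply/eqP; apply: mn; first by rewrite subn_gt0.
    by rewrite (leq_ltn_trans (leq_subr _ _)).
  exact: iter_closed.
have h3 : forall z, z \in s -> z = iter (index z s) f x /\ index z s < d.
  move=> z zs; have li : index z s < d by rewrite -sz index_mem.
  split => //.
  have := nth_index x zs; rewrite nth_traject // => ->.
have h4 : forall i, i < d -> iter i f x \in s /\ index (iter i f x) s = i.
  move=> i li; have e := (@nth_traject _ f i d li x); rewrite -/s in e; rewrite -e.
  split; first by apply: mem_nth; rewrite sz.
  by apply: index_uniq; rewrite ?sz.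
split => //; split.
  by move=> z /h3 [-> _]; apply: iter_closed.
move=> z n /h3 [ez _].
have hz : iter d f z = z by rewrite ez iter_comm hd.
rewrite (iter_mod n hz) /dvdn.
have [-> | nz] := eqVneq (n %% d) 0; first by rewrite eqxx.
apply/negbTE; apply: mn; first by rewrite lt0n.
  by rewrite ltn_mod.
by rewrite ez; apply: iter_closed.
Qed.

Notation fixc f A m := (#|[set z in A | iter m f z == z]|).

Lemma fixc_split (T : finType) (f : T -> T) (A S : {set T}) m :
  S \subset A ->
  fixc f A m = fixc f (A :\: S) m + #|[set z in S | iter m f z == z]|.
Proof.
move=> sSA; rewrite -(cardsID S [set z in A | iter m f z == z]) addnC.
congr (_ + _); apply: eq_card => z; rewrite !inE; first by rewrite andbA.
move: (subsetP sSA z); case: (z \in S); case: (z \in A); rewrite ?andbT ?andbF //=.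
by move=> /(_ isT).
Qed.

Lemma core (T U : finType) (f : T -> T) (g : U -> U) (h0 : T -> U) n :
  forall (A : {set T}) (B : {set U}), #|A| < n ->
  (forall z, z \in A -> f z \in A) -> (forall z, z \in B -> g z \in B) ->
  (forall z, z \in A -> exists2 m, 0 < m & iter m f z = z) ->
  (forall z, z \in B -> exists2 m, 0 < m & iter m g z = z) ->
  (forall m, 0 < m -> fixc f A m = fixc g B m) ->
  exists h : T -> U, [/\ forall z, z \in A -> h z \in B,
      {in A &, injective h},
      forall y, y \in B -> exists2 z, z \in A & h z = y &
      forall z, z \in A -> h (f z) = g (h z)].
Proof.
elim: n => [//|n IH] A B szA clA clB cyA cyB eqc.
case: (set_0Vmem A) => [A0 | [x0 x0A]].
  have B0 : B = set0.
    apply/setP => y; rewrite inE; apply/negP => yB.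
    case: (cyB y yB) => m m0 hm.
    have : 0 < fixc g B m by rewrite card_gt0; apply/set0Pn; exists y; rewrite inE yB hm eqxx.
    by rewrite -eqc // ; rewrite card_gt0 => /set0Pn [z]; rewrite inE A0 inE.
  by exists h0; split=> [z|z1 z2|y|z]; rewrite ?A0 ?B0 inE.
have exP : exists m, (0 < m) && [exists z in A, iter m f z == z].
  case: (cyA x0 x0A) => m m0 hm; exists m; rewrite m0 /=.
  by apply/existsP; exists x0; rewrite x0A hm eqxx.
case: (ex_minnP exP) => d /andP[d0 /existsP [x /andP [xA /eqP hx]]] dmin.
have mnA : minimal_on f A d.
  move=> m z m0 md zA; apply/negP => /eqP hz.
  have := dmin m; rewrite m0 /=.
  have -> : [exists z0 in A, iter m f z0 == z0] by apply/existsP; exists z; rewrite zA hz eqxx.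
  by move=> /(_ isT); rewrite leqNgt md.
have mnB : minimal_on g B d.
  move=> m z m0 md zB; apply/negP => /eqP hz.
  have : 0 < fixc g B m by rewrite card_gt0; apply/set0Pn; exists z; rewrite inE zB hz eqxx.
  rewrite -eqc // ; rewrite card_gt0 => /set0Pn [w]; rewrite inE => /andP [wA /eqP hw].
  by have := mnA m w m0 md wA; rewrite hw eqxx.
have [y yB hy] : exists2 y, y \in B & iter d g y = y.
  have : 0 < fixc g B d.
    by rewrite -eqc //; rewrite card_gt0; apply/set0Pn; exists x; rewrite inE xA hx eqxx.
  by rewrite card_gt0 => /set0Pn [y]; rewrite inE => /andP [yB /eqP hy]; exists y.
have [szx ux h3x h4x [h5x h6x]] := orb_facts d0 xA clA hx mnA.
have [szy uy h3y h4y [h5y h6y]] := orb_facts d0 yB clB hy mnB.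
set sx := traject f x d in szx ux h3x h4x h5x h6x.
set sy := traject g y d in szy uy h3y h4y h5y h6y.
have fsx : forall z, z \in sx -> f z \in sx.
  move=> z /h3x [ez lz]; rewrite ez -iterS (iter_mod _ hx).
  exact: (h4x _ (ltn_pmod _ d0)).1.
have bsx : forall z, z \in A -> f z \in sx -> z \in sx.
  move=> z zA fz; case: (cyA z zA) => m m0 hm.
  rewrite -hm -(prednK m0) iterSr.
  by elim: m.-1 => //= j IHj; apply: fsx.
have fsy : forall z, z \in sy -> g z \in sy.
  move=> z /h3y [ez lz]; rewrite ez -iterS (iter_mod _ hy).
  exact: (h4y _ (ltn_pmod _ d0)).1.
have bsy : forall z, z \in B -> g z \in sy -> z \in sy.
  move=> z zB fz; case: (cyB z zB) => m m0 hm.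
  rewrite -hm -(prednK m0) iterSr.
  by elim: m.-1 => //= j IHj; apply: fsy.
have cnt : forall (V : finType) (g' : V -> V) (s : seq V) ,
   uniq s -> size s = d -> (forall z m, z \in s -> (iter m g' z == z) = (d %| m)) ->
   forall m, #|[set z in [set z in s] | iter m g' z == z]| = (if d %| m then d else 0).
  move=> V g' s us ss h6 m; case: ifP => dm.
    rewrite -ss -(card_uniqP us); apply: eq_card => z; rewrite !inE.
    by case zs: (z \in s) => //=; rewrite h6 ?dm.
  apply/eqP; rewrite cards_eq0; apply/eqP/setP => z; rewrite !inE.
  by case zs: (z \in s) => //=; rewrite h6 ?dm.
have sxA : [set z in sx] \subset A by apply/subsetP => z; rewrite inE; exact: h5x.
have syB : [set z in sy] \subset B by apply/subsetP => z; rewrite inE; exact: h5y.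
set A' := A :\: [set z in sx].
set B' := B :\: [set z in sy].
have xsx : x \in sx by exact: (h4x 0 d0).1.
have szA' : #|A'| < n.
  have := cardsID [set z in sx] A; rewrite -/A'.
  have : 0 < #|A :&: [set z in sx]| by rewrite card_gt0; apply/set0Pn; exists x; rewrite !inE xA xsx.
  move: szA; rewrite ltnS; lia.
have clA' : forall z, z \in A' -> f z \in A'.
  move=> z; rewrite !inE => /andP [zs zA]; rewrite clA // andbT.
  by apply/negP => /(bsx _ zA); apply/negP.
have clB' : forall z, z \in B' -> g z \in B'.
  move=> z; rewrite !inE => /andP [zs zB]; rewrite clB // andbT.
  by apply/negP => /(bsy _ zB); apply/negP.
have cyA' : forall z, z \in A' -> exists2 m, 0 < m & iter m f z = z.
  by move=> z; rewrite !inE => /andP [_ /cyA].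
have cyB' : forall z, z \in B' -> exists2 m, 0 < m & iter m g z = z.
  by move=> z; rewrite !inE => /andP [_ /cyB].
have eqc' : forall m, 0 < m -> fixc f A' m = fixc g B' m.
  move=> m m0; have := eqc m m0.
  rewrite (fixc_split f m sxA) (fixc_split g m syB) (cnt _ _ _ ux szx h6x) (cnt _ _ _ uy szy h6y).
  by move/addIn.
have [h' [h1 h2 h3 h4]] := IH A' B' szA' clA' clB' cyA' cyB' eqc'.
exists (fun z => if z \in sx then iter (index z sx) g y else h' z).
have A'E : forall z, (z \in A') = (z \notin sx) && (z \in A) by move=> z; rewrite !inE.
have B'E : forall z, (z \in B') = (z \notin sy) && (z \in B) by move=> z; rewrite !inE.
split.
- move=> z zA; case: ifP => zs.
    by apply: h5y; exact: (h4y _ (h3x _ zs).2).1.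
  have : z \in A' by rewrite A'E zs zA.
  by move/h1; rewrite B'E => /andP [_ ->].
- move=> z1 z2 z1A z2A /=; case: ifP => z1s; case: ifP => z2s.
  + move=> e; have [e1 l1] := h3x _ z1s; have [e2 l2] := h3x _ z2s.
    have ei : index z1 sx = index z2 sx by rewrite -(h4y _ l1).2 e (h4y _ l2).2.
    by rewrite e1 e2 ei.
  + move=> e; have z2A' : z2 \in A' by rewrite A'E z2s z2A.
    by have := h1 _ z2A'; rewrite -e B'E (h4y _ (h3x _ z1s).2).1.
  + move=> e; have z1A' : z1 \in A' by rewrite A'E z1s z1A.
    by have := h1 _ z1A'; rewrite e B'E (h4y _ (h3x _ z2s).2).1.
  + apply: h2; by rewrite A'E ?z1s ?z2s.
- move=> y' y'B; case: (boolP (y' \in sy)) => ys.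
    have [e l] := h3y _ ys; exists (iter (index y' sy) f x).
      by apply: h5x; exact: (h4x _ l).1.
    by rewrite (h4x _ l).1 (h4x _ l).2 -e.
  have : y' \in B' by rewrite B'E ys y'B.
  move/h3 => [z]; rewrite A'E => /andP [zs zA] <-.
  by exists z => //; rewrite (negbTE zs).
- move=> z zA /=; case zs: (z \in sx).
    rewrite (fsx _ zs); have [e l] := h3x _ zs.
    have -> : index (f z) sx = (index z sx).+1 %% d.
      by rewrite {1}e -iterS (iter_mod _ hx) (h4x _ (ltn_pmod _ d0)).2.
    by rewrite -(iter_mod _ hy) iterS.
  have fzs : (f z \in sx) = false.
    by apply/negbTE/negP => /(bsx _ zA); rewrite zs.
  by rewrite fzs; apply: h4; rewrite A'E zs zA.
Qed.

From Stdlib Require Import ClassicalEpsilon.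

Lemma iter_pow (k : nat) (T : finType) (f : T -> T) m x :
  iter m (fds_pow k f) x = [ffun i => iter m f (x i)].
Proof.
elim: m => [|m IH] /=; first by apply/ffunP => i; rewrite ffunE.
by apply/ffunP => i; rewrite /fds_pow IH !ffunE.
Qed.

Lemma fix_pow (k : nat) (T : finType) (f : T -> T) m :
  #|[set x | iter m (fds_pow k f) x == x]| = #|[set z | iter m f z == z]| ^ k.
Proof.
rewrite -[in RHS](card_ord k) -card_ffun_on; apply: eq_card => x.
rewrite inE iter_pow; apply/eqP/ffun_onP => [e i | e].
  by rewrite inE -{2}e ffunE.
by apply/ffunP => i; rewrite ffunE; apply/eqP; have := e i; rewrite inE.
Qed.

Lemma fix_iso (T U : finType) (F : T -> T) (G : U -> U) m :
  fds_iso F G -> #|[set x | iter m F x == x]| = #|[set y | iter m G y == y]|.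
Proof.
case=> H [Hbij Hc].
have iterH : forall x, H (iter m F x) = iter m G (H x).
  by move=> x; elim: m => //= j IH; rewrite Hc IH.
rewrite -(card_imset _ (bij_inj Hbij)); apply: eq_card => y; rewrite inE.
case: Hbij => Hi HK HK'.
apply/imsetP/eqP => [[x]| e].
  by rewrite inE => /eqP ex ->; rewrite -iterH ex.
exists (Hi y); rewrite ?inE ?HK' //; apply/eqP; apply: (can_inj HK).
by rewrite iterH HK' e.
Qed.

Theorem mainTheorem17 (k : nat) (T U : finType) (f : T -> T) (g : U -> U) :
  1 <= k ->
  fds_iso (fds_pow k f) (fds_pow k g) ->
  cycle_part_iso f g.
Proof.
move=> k1 iso.
pose cs (V : finType) (e : V -> V) :=
  [set x | if excluded_middle_informative (cycle_state e x) then true else false].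
have csE : forall (V : finType) (e : V -> V) x, x \in cs V e <-> cycle_state e x.
  move=> V e x; rewrite inE; case: excluded_middle_informative => //.
have csE2 : forall (V : finType) (e : V -> V) x, x \in cs V e <-> exists2 m, 0 < m & iter m e x = x.
  move=> V e x; rewrite csE; split; [case=> m [] | case=> m]; by exists m.
have fixE : forall (V : finType) (e : V -> V) m, 0 < m ->
    fixc e (cs V e) m = #|[set z | iter m e z == z]|.
  move=> V e m m0; apply: eq_card => z; rewrite [in RHS]in_set [in LHS]in_set.
  case hz: (iter m e z == z); rewrite ?andbT ?andbF //.
  by apply/csE2; exists m => //; apply/eqP.
have [H _] := iso.
have h0 : T -> U.
  case: (pickP (@predT T)) => [t _ | T0].
    exact: (fun _ => H [ffun=> t] (Ordinal k1)).
  by move=> x; move: (T0 x).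
have eqc : forall m, 0 < m -> fixc f (cs T f) m = fixc g (cs U g) m.
  move=> m m0; rewrite !fixE //; apply: (expIn k1).
  by rewrite -!fix_pow; apply: fix_iso.
have clo : forall (V : finType) (e : V -> V) z, z \in cs V e -> e z \in cs V e.
  move=> V e z /csE2 [m m0 hm]; apply/csE2; exists m => //.
  by rewrite -iterSr iterS hm.
have [h [h1 h2 h3 h4]] := core h0 (leqnn #|cs T f|.+1)
  (clo _ f) (clo _ g)
  (fun z zA => proj1 (csE2 _ _ z) zA) (fun z zA => proj1 (csE2 _ _ z) zA) eqc.
exists h; split; [|split; [|split]].
- by move=> x /csE hx; apply/csE; apply: h1.
- by move=> x y /csE hx /csE hy; apply: h2.
- by move=> y /csE /h3 [x /csE hx e]; exists x.
- by move=> x /csE; apply: h4.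
Qed.
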